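(* Let $M\ge 1$, and let $N_s,R_s$, and for each $m\in\{1,\dots,M\}$ let $N_{d,m},R_{d,m},D_m$ be positive integers, with $D=\sum_{m=1}^M D_m$. Let $P_t>0$, $\sigma_m>0$ and $\sigma_{e,m}\ge 0$ for each $m$. Let $\bar{\mathbf H}_m\in\mathbb C^{N_{d,m}\times N_s}$ be given matrices, let $\mathbf L\in\{0,1\}^{D\times D}$ be a fixed permutation matrix, and let $\mathbf A_m=[\mathbf 0_{D_m\times\sum_{i<m}D_i},\ \mathbf I_{D_m},\ \mathbf 0_{D_m\times\sum_{i>m}D_i}]$. The optimization variables are $\mathcal S=\{\{\mathbf P_m,\mathbf F_m\},\mathbf T,\mathbf W,\mathbf U\}$ with $\mathbf P_m\in\mathbb C^{D_m\times R_{d,m}}$, $\mathbf F_m\in\mathbb C^{R_{d,m}\times N_{d,m}}$, $\mathbf T\in\mathbb C^{N_s\times R_s}$, $\mathbf W\in\mathbb C^{R_s\times D}$, and $\mathbf U\in\mathbb C^{D\times D}$ lower triangular with all diagonal entries equal to $1$ (only its strictly lower triangular entries are free). Define $$\mathrm{MSE}=\sum_{m=1}^M \mathrm{tr}\Big(\mathbf P_m\mathbf F_m\bar{\mathbf H}_m\mathbf T\mathbf W\mathbf W^H\mathbf T^H\bar{\mathbf H}_m^H\mathbf F_m^H\mathbf P_m^H+\sigma_{e,m}^2\,\mathrm{tr}(\mathbf T\mathbf W\mathbf W^H\mathbf T^H)\,\mathbf P_m\mathbf F_m\mathbf F_m^H\mathbf P_m^H+\sigma_m^2\mathbf P_m\mathbf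 F_m\mathbf F_m^H\mathbf P_m^H-\mathbf P_m\mathbf F_m\bar{\mathbf H}_m\mathbf T\mathbf W\mathbf U^H\mathbf L\mathbf A_m^H-\mathbf A_m\mathbf L^T\mathbf U\mathbf W^H\mathbf T^H\bar{\mathbf H}_m^H\mathbf F_m^H\mathbf P_m^H\Big)+\mathrm{tr}(\mathbf U\mathbf U^H),$$ and, with $\hat{\mathbf H}_m=\bar{\mathbf H}_m/\sigma_m$ and $\hat\sigma_{e,m}=\sigma_{e,m}/\sigma_m$, $$\mathrm{MSE}_\sigma=\sum_{m=1}^M \mathrm{tr}\Big(\mathbf P_m\mathbf F_m\hat{\mathbf H}_m\mathbf T\mathbf W\mathbf W^H\mathbf T^H\hat{\mathbf H}_m^H\mathbf F_m^H\mathbf P_m^H+\hat\sigma_{e,m}^2\,\mathrm{tr}(\mathbf T\mathbf W\mathbf W^H\mathbf T^H)\,\mathbf P_m\mathbf F_m\mathbf F_m^H\mathbf P_m^H+\tfrac{1}{P_t}\mathrm{tr}(\mathbf T\mathbf W\mathbf W^H\mathbf T^H)\,\mathbf P_m\mathbf F_m\mathbf F_m^H\mathbf P_m^H-\mathbf P_m\mathbf F_m\hat{\mathbf H}_m\mathbf T\mathbf W\mathbf U^H\mathbf L\mathbf A_m^H-\mathbf A_m\mathbf L^T\mathbf U\mathbf W^H\mathbf T^H\hat{\mathbf H}_m^H\mathbf F_m^H\mathbf P_m^H\Big)+\mathrm{tr}(\mathbf U\mathbf U^H).$$ Consider problem (I): minimize $\mathrm{MSE}$ over $\mathcal S$ subject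 to $|[\mathbf F_m]_{i,j}|=1$ for all $m,i,j$, $|[\mathbf T]_{i,j}|=1$ for all $i,j$, and $\|\mathbf T\mathbf W\|^2\le P_t$; and problem (II): minimize $\mathrm{MSE}_\sigma$ over $\mathcal S$ subject only to $|[\mathbf F_m]_{i,j}|=1$ for all $m,i,j$ and $|[\mathbf T]_{i,j}|=1$ for all $i,j$. Let $(\{\mathbf P_m^\star,\mathbf F_m^\star\},\mathbf T^\star,\mathbf W^\star,\mathbf U^\star)$ be a KKT solution of problem (II), and let $a=\sqrt{P_t}/\|\mathbf T^\star\mathbf W^\star\|$. Then $(\{\tfrac{1}{a\sigma_m}\mathbf P_m^\star,\mathbf F_m^\star\},\mathbf T^\star,a\mathbf W^\star,\mathbf U^\star)$ is a KKT solution of problem (I).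
   Context: $\|\cdot\|$ denotes the Frobenius norm; $(\cdot)^H$ is conjugate transpose. KKT solutions are understood for the real optimization problems obtained by treating real and imaginary parts of the complex variables (equivalently, Wirtinger derivatives with respect to conjugate variables), with the unit-modulus conditions as equality constraints and $\|\mathbf T\mathbf W\|^2\le P_t$ as an inequality constraint. The scaling factor $a$ is defined by the given formula (so $\mathbf T^\star\mathbf W^\star\neq \mathbf 0$ is implicit). *)

(* Defs.v *)
From HB Require Import structures.
From mathcomp Require Import all_boot all_order all_algebra.
From mathcomp Require Import all_classical all_reals.
From mathcomp Require Import topology normedtype derive.
From mathcomp Require Import complex perm.

Set Implicit Arguments.
Unset Strict Implicit.
Unset Printing Implicit Defensive.

Import Order.TTheory GRing.Theory Num.Theory numFieldNormedType.Exports.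
Local Open Scope ring_scope.

Section Defs.
Variable R : realType.
Local Notation C := R[i].

Definition rC (x : R) : C := real_complex R x.

Definition mxH m n (A : 'M[C]_(m, n)) : 'M[C]_(n, m) := (map_mx (@conjc R) A)^T.

Definition sqmod (z : C) : R := complex.Re z ^+ 2 + complex.Im z ^+ 2.

Definition frob2 m n (A : 'M[C]_(m, n)) : R := \sum_i \sum_j sqmod (A i j).
Definition frob m n (A : 'M[C]_(m, n)) : R := Num.sqrt (frob2 A).

Definition unimod m n (A : 'M[C]_(m, n)) : Prop := forall i j, `|A i j| = 1.

Definition unit_lower n (U : 'M[C]_n) : Prop :=
  (forall i j : 'I_n, (i < j)%N -> U i j = 0) /\ (forall i : 'I_n, U i i = 1).

(* strictly lower triangular (admissible directions for U) *)
Definition strict_lower n (U : 'M[C]_n) : Prop :=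
  forall i j : 'I_n, (i <= j)%N -> U i j = 0.

Variables (M Ns Rs : nat) (Nd Rd Dm : 'I_M -> nat).
Local Notation D := (\sum_(m < M) Dm m)%N.

(* offset sum_{i<m} D_i and block selection matrix A_m = [0, I_{D_m}, 0] *)
Definition offset (m : 'I_M) : nat := (\sum_(i < M | (i < m)%N) Dm i)%N.
Definition selA (m : 'I_M) : 'M[C]_(Dm m, D) :=
  \matrix_(i, j) ((nat_of_ord j == offset m + i)%N)%:R.

Local Notation Ptype := (forall m : 'I_M, 'M[C]_(Dm m, Rd m)).
Local Notation Ftype := (forall m : 'I_M, 'M[C]_(Rd m, Nd m)).

Variables (Hb : forall m : 'I_M, 'M[C]_(Nd m, Ns)) (se sg : 'I_M -> R) (Pt : R)
  (L : 'M[C]_D).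

(* MSE (real-valued; the trace expression is real, we take its real part) *)
Definition mse (P : Ptype) (F : Ftype) (T : 'M[C]_(Ns, Rs)) (W : 'M[C]_(Rs, D))
  (U : 'M[C]_D) : R :=
  complex.Re (\sum_(m < M) \tr (
        P m *m F m *m Hb m *m T *m W *m mxH W *m mxH T *m mxH (Hb m)
            *m mxH (F m) *m mxH (P m)
      + (rC (se m ^+ 2) * \tr (T *m W *m mxH W *m mxH T))
            *: (P m *m F m *m mxH (F m) *m mxH (P m))
      + rC (sg m ^+ 2) *: (P m *m F m *m mxH (F m) *m mxH (P m))
      - P m *m F m *m Hb m *m T *m W *m mxH U *m L *m mxH (selA m)
      - selA m *m L^T *m U *m mxH W *m mxH T *m mxH (Hb m) *m mxH (F m)
            *m mxH (P m))
      + \tr (U *m mxH U)).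

Definition mse_sig (P : Ptype) (F : Ftype) (T : 'M[C]_(Ns, Rs)) (W : 'M[C]_(Rs, D))
  (U : 'M[C]_D) : R :=
  let Hh := fun m => rC (sg m)^-1 *: Hb m in
  let seh := fun m => se m / sg m in
  complex.Re (\sum_(m < M) \tr (
        P m *m F m *m Hh m *m T *m W *m mxH W *m mxH T *m mxH (Hh m)
            *m mxH (F m) *m mxH (P m)
      + (rC (seh m ^+ 2) * \tr (T *m W *m mxH W *m mxH T))
            *: (P m *m F m *m mxH (F m) *m mxH (P m))
      + (rC Pt^-1 * \tr (T *m W *m mxH W *m mxH T))
            *: (P m *m F m *m mxH (F m) *m mxH (P m))
      - P m *m F m *m Hh m *m T *m W *m mxH U *m L *m mxH (selA m)
      - selA m *m L^T *m U *m mxH W *m mxH T *m mxH (Hh m) *m mxH (F m)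
            *m mxH (P m))
      + \tr (U *m mxH U)).

Definition lagI (lamF : forall m : 'I_M, 'I_(Rd m) -> 'I_(Nd m) -> R)
  (lamT : 'I_Ns -> 'I_Rs -> R) (mu : R)
  (P : Ptype) (F : Ftype) (T : 'M[C]_(Ns, Rs)) (W : 'M[C]_(Rs, D)) (U : 'M[C]_D) : R :=
  mse P F T W U
  + \sum_(m < M) \sum_i \sum_j lamF m i j * (sqmod (F m i j) - 1)
  + \sum_i \sum_j lamT i j * (sqmod (T i j) - 1)
  + mu * (frob2 (T *m W) - Pt).

Definition lagII (lamF : forall m : 'I_M, 'I_(Rd m) -> 'I_(Nd m) -> R)
  (lamT : 'I_Ns -> 'I_Rs -> R)
  (P : Ptype) (F : Ftype) (T : 'M[C]_(Ns, Rs)) (W : 'M[C]_(Rs, D)) (U : 'M[C]_D) : R :=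
  mse_sig P F T W U
  + \sum_(m < M) \sum_i \sum_j lamF m i j * (sqmod (F m i j) - 1)
  + \sum_i \sum_j lamT i j * (sqmod (T i j) - 1).

(* Stationarity of a real-valued function of the (real and imaginary parts of the)
   variables: every directional derivative exists and vanishes, the free directions
   for U being the strictly lower triangular matrices. *)
Definition stationary
  (Lag : Ptype -> Ftype -> 'M[C]_(Ns, Rs) -> 'M[C]_(Rs, D) -> 'M[C]_D -> R)
  (P : Ptype) (F : Ftype) (T : 'M[C]_(Ns, Rs)) (W : 'M[C]_(Rs, D)) (U : 'M[C]_D) : Prop :=
  forall (dP : Ptype) (dF : Ftype) (dT : 'M[C]_(Ns, Rs)) (dW : 'M[C]_(Rs, D))
         (dU : 'M[C]_D),
    strict_lower dU ->
    is_derive (0 : R) (1 : R)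
      (fun t : R => Lag (fun m => P m + rC t *: dP m) (fun m => F m + rC t *: dF m)
                        (T + rC t *: dT) (W + rC t *: dW) (U + rC t *: dU))
      (0 : R).

Definition KKT_I (P : Ptype) (F : Ftype) (T : 'M[C]_(Ns, Rs)) (W : 'M[C]_(Rs, D))
  (U : 'M[C]_D) : Prop :=
  [/\ forall m, unimod (F m), unimod T, unit_lower U, frob2 (T *m W) <= Pt &
      exists lamF lamT mu, [/\ 0 <= mu, mu * (frob2 (T *m W) - Pt) = 0 &
        stationary (lagI lamF lamT mu) P F T W U]].

Definition KKT_II (P : Ptype) (F : Ftype) (T : 'M[C]_(Ns, Rs)) (W : 'M[C]_(Rs, D))
  (U : 'M[C]_D) : Prop :=
  [/\ forall m, unimod (F m), unimod T, unit_lower U &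
      exists lamF lamT, stationary (lagII lamF lamT) P F T W U].

End Defs.

(* Main.v *)
Require Import Defs.
From HB Require Import structures.
From mathcomp Require Import all_boot all_order all_algebra.
From mathcomp Require Import all_classical all_reals.
From mathcomp Require Import topology normedtype derive.
From mathcomp Require Import complex perm.
From mathcomp Require Import ring lra.
Import Order.TTheory GRing.Theory Num.Theory.
Local Open Scope ring_scope.

Section Aux.
Variable R : realType.
Local Notation C := R[i].

Lemma mxH_mul m n p (A : 'M[C]_(m, n)) (B : 'M[C]_(n, p)) :
  mxH (A *m B) = mxH B *m mxH A.
Proof. by rewrite /mxH map_mxM trmx_mul. Qed.

Lemma mxH_add m n (A B : 'M[C]_(m, n)) : mxH (A + B) = mxH A + mxH B.
Proof. by apply/matrixP => i j; rewrite !mxE rmorphD. Qed.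

Lemma mxH_opp m n (A : 'M[C]_(m, n)) : mxH (- A) = - mxH A.
Proof. by apply/matrixP => i j; rewrite !mxE rmorphN. Qed.

Lemma mxH_scale m n c (A : 'M[C]_(m, n)) : mxH (c *: A) = (c^*)%C *: mxH A.
Proof. by apply/matrixP => i j; rewrite !mxE rmorphM. Qed.

Lemma conj_rC (x : R) : ((rC x)^*)%C = rC x.
Proof. exact: conjc_real. Qed.

Lemma rC_is_rmorph : rC (1 : R) = 1. Proof. by []. Qed.

Lemma Re_rCM (x : R) (z : C) : complex.Re (rC x * z) = x * complex.Re z.
Proof. by case: z => a b; rewrite /rC /= !mul0r subr0. Qed.

Lemma Im_rCM (x : R) (z : C) : complex.Im (rC x * z) = x * complex.Im z.
Proof. by case: z => a b; rewrite /rC /= !mul0r addr0. Qed.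

Lemma Re_add (z w : C) : complex.Re (z + w) = complex.Re z + complex.Re w.
Proof. by case: z; case: w. Qed.

Lemma Im_add (z w : C) : complex.Im (z + w) = complex.Im z + complex.Im w.
Proof. by case: z; case: w. Qed.

Lemma Re_sum (I : finType) (f : I -> C) : complex.Re (\sum_i f i) = \sum_i complex.Re (f i).
Proof. by elim/big_rec2: _ => // i y z _ <-; rewrite Re_add. Qed.

Lemma Im_sum (I : finType) (f : I -> C) : complex.Im (\sum_i f i) = \sum_i complex.Im (f i).
Proof. by elim/big_rec2: _ => // i y z _ <-; rewrite Im_add. Qed.

Lemma mulcJ_sqmod (z : C) : z * (z^*)%C = rC (sqmod z).
Proof.
case: z => a b; rewrite /rC /sqmod /=; congr Complex; rewrite /=.
  by rewrite -!expr2; ring.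
by ring.
Qed.

Lemma tr_mxH_frob m n (A : 'M[C]_(m, n)) : \tr (A *m mxH A) = rC (frob2 A).
Proof.
rewrite /mxtrace /frob2 /rC raddf_sum; apply: eq_bigr => i _.
rewrite mxE raddf_sum; apply: eq_bigr => j _.
by rewrite !mxE mulcJ_sqmod.
Qed.

Lemma sqmod_ge0 (z : C) : 0 <= sqmod z.
Proof. by rewrite /sqmod addr_ge0 // sqr_ge0. Qed.

Lemma frob2_ge0 m n (A : 'M[C]_(m, n)) : 0 <= frob2 A.
Proof. by rewrite /frob2 sumr_ge0 // => i _; rewrite sumr_ge0 // => j _; apply: sqmod_ge0. Qed.

Lemma sqmod_rCM (x : R) (z : C) : sqmod (rC x * z) = x ^+ 2 * sqmod z.
Proof. by rewrite /sqmod Re_rCM Im_rCM; ring. Qed.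

Lemma frob2_scale m n (x : R) (A : 'M[C]_(m, n)) : frob2 (rC x *: A) = x ^+ 2 * frob2 A.
Proof.
rewrite /frob2 mulr_sumr; apply: eq_bigr => i _; rewrite mulr_sumr; apply: eq_bigr => j _.
by rewrite mxE sqmod_rCM.
Qed.

Lemma frob2_eq0 m n (A : 'M[C]_(m, n)) : frob2 A = 0 -> A = 0.
Proof.
move=> h; apply/matrixP => i j; rewrite mxE.
have hi : \sum_j sqmod (A i j) = 0.
  by apply: (psumr_eq0P _ h) => // k _; apply: sumr_ge0 => l _; apply: sqmod_ge0.
have hj : sqmod (A i j) = 0.
  by apply: (psumr_eq0P _ hi) => // k _; apply: sqmod_ge0.
move: hj; rewrite /sqmod; case: (A i j) => a b /= /eqP.
rewrite paddr_eq0 ?sqr_ge0 // !sqrf_eq0 => /andP[/eqP -> /eqP ->] //.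
Qed.

End Aux.

Section Aux2.
Variable R : realType.
Local Notation C := R[i].

Lemma mulZmx m n p (c : C) (A : 'M[C]_(m, n)) (B : 'M[C]_(n, p)) :
  (c *: A) *m B = c *: (A *m B).
Proof. by rewrite scalemxAl. Qed.
Lemma mulmxZ m n p (c : C) (A : 'M[C]_(m, n)) (B : 'M[C]_(n, p)) :
  A *m (c *: B) = c *: (A *m B).
Proof. by rewrite scalemxAr. Qed.

Lemma alg_id (a s e pt N S : R) (t1 t4 t5 : C) :
  a != 0 -> s != 0 -> pt != 0 ->
  rC (a * s)^-1 * (rC (a * s)^-1 * (rC a * (rC a * t1))) +
  rC (e ^+ 2) * (rC a * (rC a * rC N)) * (rC (a * s)^-1 * (rC (a * s)^-1 * rC S)) +
  rC (s ^+ 2) * (rC (a * s)^-1 * (rC (a * s)^-1 * rC S)) -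
  rC (a * s)^-1 * (rC a * t4) - rC (a * s)^-1 * (rC a * t5) =
  rC s^-1 * (rC s^-1 * t1) + rC ((e / s) ^+ 2) * rC N * rC S +
  rC pt^-1 * rC N * rC S - rC s^-1 * t4 - rC s^-1 * t5 +
  rC ((a ^- 2 - N / pt) * S).
Proof.
move=> ha hs hpt.
rewrite /rC !(rmorphM, rmorphB, rmorphXn, fmorphV, rmorphD).
have ha' : real_complex R a != 0 by rewrite (inj_eq (@complexI R)).
have hs' : real_complex R s != 0 by rewrite (inj_eq (@complexI R)).
have hp' : real_complex R pt != 0 by rewrite (inj_eq (@complexI R)).
by field; rewrite ?ha' ?hs' ?hp'.
Qed.

Lemma term_id (d r n ns rs D : nat) (P : 'M[C]_(d, r)) (F : 'M[C]_(r, n))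
  (H : 'M[C]_(n, ns)) (T : 'M[C]_(ns, rs)) (W : 'M[C]_(rs, D)) (U L : 'M[C]_D)
  (A : 'M[C]_(d, D)) (a s e pt : R) :
  a != 0 -> s != 0 -> pt != 0 ->
  \tr ((rC (a * s)^-1 *: P) *m F *m H *m T *m (rC a *: W) *m mxH (rC a *: W) *m mxH T *m mxH H *m mxH F *m mxH (rC (a * s)^-1 *: P)
      + (rC (e ^+ 2) * \tr (T *m (rC a *: W) *m mxH (rC a *: W) *m mxH T)) *: ((rC (a * s)^-1 *: P) *m F *m mxH F *m mxH (rC (a * s)^-1 *: P))
      + rC (s ^+ 2) *: ((rC (a * s)^-1 *: P) *m F *m mxH F *m mxH (rC (a * s)^-1 *: P))
      - (rC (a * s)^-1 *: P) *m F *m H *m T *m (rC a *: W) *m mxH U *m L *m mxH A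
      - A *m L^T *m U *m mxH (rC a *: W) *m mxH T *m mxH H *m mxH F *m mxH (rC (a * s)^-1 *: P))
  = \tr (P *m F *m (rC s^-1 *: H) *m T *m W *m mxH W *m mxH T *m mxH (rC s^-1 *: H) *m mxH F *m mxH P
      + (rC ((e / s) ^+ 2) * \tr (T *m W *m mxH W *m mxH T)) *: (P *m F *m mxH F *m mxH P)
      + (rC pt^-1 * \tr (T *m W *m mxH W *m mxH T)) *: (P *m F *m mxH F *m mxH P)
      - P *m F *m (rC s^-1 *: H) *m T *m W *m mxH U *m L *m mxH A
      - A *m L^T *m U *m mxH W *m mxH T *m mxH (rC s^-1 *: H) *m mxH F *m mxH P)
    + rC ((a ^- 2 - frob2 (T *m W) / pt) * frob2 (P *m F)).
Proof.
move=> ha hs hpt.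
have eTW : \tr (T *m W *m mxH W *m mxH T) = rC (frob2 (T *m W)).
  by rewrite -tr_mxH_frob mxH_mul !mulmxA.
have ePF : \tr (P *m F *m mxH F *m mxH P) = rC (frob2 (P *m F)).
  by rewrite -tr_mxH_frob mxH_mul !mulmxA.
rewrite !mxH_scale !conj_rC.
rewrite !(raddfB, raddfD) /=.
do 4 rewrite ?[in X in X + _ + _ - _ - _ = _]mulZmx ?[in X in X + _ + _ - _ - _ = _]mulmxZ.
do 4 rewrite ?[in X in _ + X + _ - _ - _ = _]mulZmx ?[in X in _ + X + _ - _ - _ = _]mulmxZ.
do 4 rewrite ?[in X in _ + _ + X - _ - _ = _]mulZmx ?[in X in _ + _ + X - _ - _ = _]mulmxZ.
do 4 rewrite ?[in X in _ + _ + _ - X - _ = _]mulZmx ?[in X in _ + _ + _ - X - _ = _]mulmxZ.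
do 4 rewrite ?[in X in _ + _ + _ - _ - X = _]mulZmx ?[in X in _ + _ + _ - _ - X = _]mulmxZ.
do 4 rewrite ?[in X in _ = X + _ + _ - _ - _ + _]mulZmx ?[in X in _ = X + _ + _ - _ - _ + _]mulmxZ.
do 4 rewrite ?[in X in _ = _ + X + _ - _ - _ + _]mulZmx ?[in X in _ = _ + X + _ - _ - _ + _]mulmxZ.
do 4 rewrite ?[in X in _ = _ + _ + X - _ - _ + _]mulZmx ?[in X in _ = _ + _ + X - _ - _ + _]mulmxZ.
do 4 rewrite ?[in X in _ = _ + _ + _ - X - _ + _]mulZmx ?[in X in _ = _ + _ + _ - X - _ + _]mulmxZ.
do 4 rewrite ?[in X in _ = _ + _ + _ - _ - X + _]mulZmx ?[in X in _ = _ + _ + _ - _ - X + _]mulmxZ.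
rewrite ?[in X in X + _ + _ - _ - _ = _]mxtraceZ.
rewrite ?[in X in _ + X + _ - _ - _ = _]mxtraceZ.
rewrite ?[in X in _ + _ + X - _ - _ = _]mxtraceZ.
rewrite ?[in X in _ + _ + _ - X - _ = _]mxtraceZ.
rewrite ?[in X in _ + _ + _ - _ - X = _]mxtraceZ.
rewrite ?[in X in _ = X + _ + _ - _ - _ + _]mxtraceZ.
rewrite ?[in X in _ = _ + X + _ - _ - _ + _]mxtraceZ.
rewrite ?[in X in _ = _ + _ + X - _ - _ + _]mxtraceZ.
rewrite ?[in X in _ = _ + _ + _ - X - _ + _]mxtraceZ.
rewrite ?[in X in _ = _ + _ + _ - _ - X + _]mxtraceZ.
rewrite eTW ePF.
by apply: alg_id.
Qed.
End Aux2.

Section Aux3.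
Variable R : realType.
Local Notation C := R[i].
Variables (M Ns Rs : nat) (Nd Rd Dm : 'I_M -> nat).
Local Notation D := (\sum_(m < M) Dm m)%N.
Variables (Hb : forall m : 'I_M, 'M[C]_(Nd m, Ns)) (se sg : 'I_M -> R) (Pt : R)
  (L : 'M[C]_D).

Lemma mse_phi (a : R) (P : forall m, 'M[C]_(Dm m, Rd m)) (F : forall m, 'M[C]_(Rd m, Nd m))
  (T : 'M[C]_(Ns, Rs)) (W : 'M[C]_(Rs, D)) (U : 'M[C]_D) :
  a != 0 -> (forall m, sg m != 0) -> Pt != 0 ->
  mse Hb se sg L (fun m => rC (a * sg m)^-1 *: P m) F T (rC a *: W) U =
  mse_sig Hb se sg Pt L P F T W U
  + (a ^- 2 - frob2 (T *m W) / Pt) * \sum_m frob2 (P m *m F m).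
Proof.
move=> ha hs hp; rewrite /mse /mse_sig.
under eq_bigr => m _ do rewrite (@term_id R _ _ _ _ _ _ (P m) (F m) (Hb m) T W U L _ a (sg m) (se m) Pt ha (hs m) hp).
rewrite big_split /= -addrA [X in _ + X]addrC addrA Re_add; congr (_ + _).
rewrite Re_sum mulr_sumr; apply: eq_bigr => m _ //.
Qed.
End Aux3.

Section Poly.
Variable R : realType.
Local Notation C := R[i].

Definition ispoly (f : R -> R) := exists p : {poly R}, forall t, f t = p.[t].
Definition ispolyC (f : R -> C) := ispoly (fun t => complex.Re (f t)) /\ ispoly (fun t => complex.Im (f t)).

Lemma ispoly_cst c : ispoly (fun _ => c).
Proof. by exists c%:P => t; rewrite hornerC. Qed.

Lemma ispoly_id : ispoly id.
Proof. by exists 'X => t; rewrite hornerX. Qed.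

Lemma ispolyD f g : ispoly f -> ispoly g -> ispoly (fun t => f t + g t).
Proof. by move=> [p hp] [q hq]; exists (p + q) => t; rewrite hornerD hp hq. Qed.

Lemma ispolyN f : ispoly f -> ispoly (fun t => - f t).
Proof. by move=> [p hp]; exists (- p) => t; rewrite hornerN hp. Qed.

Lemma ispolyM f g : ispoly f -> ispoly g -> ispoly (fun t => f t * g t).
Proof. by move=> [p hp] [q hq]; exists (p * q) => t; rewrite hornerM hp hq. Qed.

Lemma ispoly_sum (I : finType) (f : I -> R -> R) :
  (forall i, ispoly (f i)) -> ispoly (fun t => \sum_i f i t).
Proof.
move=> h; have [p hp] := fin_all_exists h.
exists (\sum_i p i) => t; rewrite horner_sum; apply: eq_bigr => i _; exact: hp.
Qed.

Lemma ispolyC_cst c : ispolyC (fun _ => c).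
Proof. by split; apply: ispoly_cst. Qed.

Lemma ispolyC_lin c : ispolyC (fun t => rC t * c).
Proof.
split.
  by under [fun t => _]funext => t do rewrite Re_rCM; apply: ispolyM; [apply: ispoly_id|apply: ispoly_cst].
by under [fun t => _]funext => t do rewrite Im_rCM; apply: ispolyM; [apply: ispoly_id|apply: ispoly_cst].
Qed.

Lemma ispolyCD f g : ispolyC f -> ispolyC g -> ispolyC (fun t => f t + g t).
Proof.
move=> [f1 f2] [g1 g2]; split.
  by under [fun t => _]funext => t do rewrite Re_add; apply: ispolyD.
by under [fun t => _]funext => t do rewrite Im_add; apply: ispolyD.
Qed.

Lemma Re_mul (x y : C) : complex.Re (x * y) = complex.Re x * complex.Re y - complex.Im x * complex.Im y.
Proof. by case: x => a b; case: y => c d. Qed.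
Lemma Im_mul (x y : C) : complex.Im (x * y) = complex.Re x * complex.Im y + complex.Im x * complex.Re y.
Proof. by case: x => a b; case: y => c d. Qed.

Lemma ispolyCM f g : ispolyC f -> ispolyC g -> ispolyC (fun t => f t * g t).
Proof.
move=> [f1 f2] [g1 g2]; split.
  under [fun t => _]funext => t do rewrite Re_mul.
  by apply: ispolyD; [apply: ispolyM|apply: ispolyN; apply: ispolyM].
under [fun t => _]funext => t do rewrite Im_mul.
by apply: ispolyD; apply: ispolyM.
Qed.

Lemma ispolyC_sum (I : finType) (f : I -> R -> C) :
  (forall i, ispolyC (f i)) -> ispolyC (fun t => \sum_i f i t).
Proof.
move=> h; split.
  under [fun t => _]funext => t do rewrite Re_sum.
  by apply: ispoly_sum => i; case: (h i).
under [fun t => _]funext => t do rewrite Im_sum.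
by apply: ispoly_sum => i; case: (h i).
Qed.

Lemma ispoly_sqmod f : ispolyC f -> ispoly (fun t => sqmod (f t)).
Proof.
move=> [f1 f2]; rewrite /sqmod.
by apply: ispolyD; rewrite /GRing.exp /=; apply: ispolyM.
Qed.

Lemma frob2_lin_poly m n p (A dA : 'M[C]_(m, n)) (B dB : 'M[C]_(n, p)) :
  ispoly (fun t => frob2 ((A + rC t *: dA) *m (B + rC t *: dB))).
Proof.
rewrite /frob2; apply: ispoly_sum => i; apply: ispoly_sum => j.
eapply ispoly_sqmod.
under [fun t => _]funext => t do rewrite mxE.
apply: ispolyC_sum => k.
under [fun t => _]funext => t do rewrite !mxE.
by apply: ispolyCM; apply: ispolyCD; (apply: ispolyC_cst || apply: ispolyC_lin).
Qed.

End Poly.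

Theorem theorem1 (R : realType) (M Ns Rs : nat) (Nd Rd Dm : 'I_M -> nat)
  (hM : (0 < M)%N) (hNs : (0 < Ns)%N) (hRs : (0 < Rs)%N)
  (hNd : forall m, (0 < Nd m)%N) (hRd : forall m, (0 < Rd m)%N)
  (hDm : forall m, (0 < Dm m)%N)
  (Pt : R) (se sg : 'I_M -> R)
  (hPt : 0 < Pt) (hsg : forall m, 0 < sg m) (hse : forall m, 0 <= se m)
  (Hb : forall m : 'I_M, 'M[R[i]]_(Nd m, Ns))
  (s : {perm 'I_(\sum_(m < M) Dm m)})
  (P : forall m : 'I_M, 'M[R[i]]_(Dm m, Rd m))
  (F : forall m : 'I_M, 'M[R[i]]_(Rd m, Nd m))
  (T : 'M[R[i]]_(Ns, Rs)) (W : 'M[R[i]]_(Rs, \sum_(m < M) Dm m))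
  (U : 'M[R[i]]_(\sum_(m < M) Dm m)) :
  KKT_II Hb se sg Pt (perm_mx s) P F T W U ->
  T *m W != 0 ->
  let a := Num.sqrt Pt / frob (T *m W) in
  KKT_I Hb se sg Pt (perm_mx s)
    (fun m => rC (a * sg m)^-1 *: P m) F T (rC a *: W) U.
Proof.
move=> [hF hT hU [lamF [lamT hst]]] hTW a.
pose N0 := frob2 (T *m W).
have hN0 : 0 < N0.
  rewrite lt_def frob2_ge0 andbT; apply/eqP => h0; move/eqP: hTW; apply.
  exact: frob2_eq0.
have ha : 0 < a by rewrite /a /frob divr_gt0 // sqrtr_gt0.
have ha0 : a != 0 by rewrite gt_eqF.
have hP0 : Pt != 0 by rewrite gt_eqF.
have hsg0 : forall m, sg m != 0 by move=> m; rewrite gt_eqF.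
have ha2 : a ^+ 2 = Pt / N0.
  by rewrite /a /frob expr_div_n !sqr_sqrtr // ?ltW // frob2_ge0.
have hfrob : frob2 (T *m (rC a *: W)) = Pt.
  rewrite mulmxZ frob2_scale ha2 -/N0; field; by rewrite gt_eqF.
pose S0 := \sum_m frob2 (P m *m F m).
have hS0 : 0 <= S0 by rewrite sumr_ge0 // => m _; apply: frob2_ge0.
pose mu := S0 / (Pt * a ^+ 2).
split => //; first by rewrite hfrob.
exists lamF, lamT, mu; split.
- by rewrite /mu divr_ge0 // mulr_ge0 // ?sqr_ge0 // ltW.
- by rewrite hfrob subrr mulr0.
move=> dP dF dT dW dU hdU.
pose dP' := fun m => rC (a * sg m) *: dP m.
pose dW' := rC a^-1 *: dW.
have h2 := hst dP' dF dT dW' dU hdU.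
have [pS hpS] : @ispoly R (fun t => \sum_m frob2 ((P m + rC t *: dP' m) *m (F m + rC t *: dF m))).
  by apply: ispoly_sum => m; apply: frob2_lin_poly.
have [pN hpN] := @frob2_lin_poly R _ _ _ T dT W dW'.
pose q := ((a ^- 2)%:P - pN * (Pt^-1)%:P) * pS + mu%:P * ((a ^+ 2)%:P * pN - Pt%:P).
have eqf : forall t,
  lagI Hb se sg Pt (perm_mx s) lamF lamT mu
    (fun m => rC (a * sg m)^-1 *: P m + rC t *: dP m) (fun m => F m + rC t *: dF m)
    (T + rC t *: dT) (rC a *: W + rC t *: dW) (U + rC t *: dU) =
  lagII Hb se sg Pt (perm_mx s) lamF lamT
    (fun m => P m + rC t *: dP' m) (fun m => F m + rC t *: dF m)
    (T + rC t *: dT) (W + rC t *: dW') (U + rC t *: dU) + q.[t].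
  move=> t.
  have eP : (fun m => rC (a * sg m)^-1 *: P m + rC t *: dP m) =
            (fun m => rC (a * sg m)^-1 *: (P m + rC t *: dP' m)).
    apply: boolp.functional_extensionality_dep => m.
    rewrite /dP' scalerDr !scalerA; congr (_ + _); congr (_ *: _).
    rewrite mulrAC /rC -rmorphM mulVf ?rmorph1 ?mul1r //.
    by rewrite mulf_neq0.
  have eW : rC a *: W + rC t *: dW = rC a *: (W + rC t *: dW').
    rewrite /dW' scalerDr !scalerA; congr (_ + _); congr (_ *: _).
    by rewrite mulrAC /rC -rmorphM mulfV ?rmorph1 ?mul1r.
  rewrite eP eW /lagI /lagII.
  rewrite (@mse_phi R M Ns Rs Nd Rd Dm Hb se sg Pt (perm_mx s) a (fun m => P m + rC t *: dP' m) _ _ _ _ ha0 hsg0 hP0).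
  rewrite mulmxZ frob2_scale /q !(hornerD, hornerM, hornerN, hornerC) -hpS -hpN.
  ring.
rewrite (funext eqf).
have hd := is_deriveD h2 (is_derive_poly q 0).
apply: (is_derive_eq hd).
have hN : pN.[0] = N0.
  by rewrite -hpN /rC rmorph0 !scale0r !addr0.
have hS : pS.[0] = S0.
  rewrite -hpS /rC rmorph0; apply: eq_bigr => m _; by rewrite !scale0r !addr0.
rewrite /q !(derivD, derivM, derivN, derivC) !(hornerD, hornerM, hornerN, hornerC) hN hS.
rewrite /mu ha2.
have hN0' : N0 != 0 by rewrite gt_eqF.
by field; rewrite hP0 hN0'.
Qed.
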